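(* Let $V\subseteq\mathcal V$ be finite and $\Theta,\Psi\subseteq\mathcal P(\mathcal H_V)$ arbitrary. Then (1) $\Theta\preceq_{dem}\Psi$ iff $(I-\Psi)\preceq_{ang}(I-\Theta)$; (2) $\Theta\le_S\Psi$ iff $(I-\Psi)\le_H(I-\Theta)$, where $I-\Theta=\{I-M:M\in\Theta\}$.
   Context: $\mathcal H_V$ is a finite-dimensional Hilbert space with identity $I$. $\mathcal D(\mathcal H_V)$: partial density operators; $\mathcal P(\mathcal H_V)$: effects (positive operators with eigenvalues in $[0,1]$); $\sqsubseteq$: Löwner order. $\mathrm{Exp}_{dem}(\rho\models\Theta)=\inf_{M\in\Theta}{\rm tr}(M\rho)$ (${\rm tr}(\rho)$ if $\Theta=\emptyset$); $\mathrm{Exp}_{ang}(\rho\models\Theta)=\sup_{M\in\Theta}{\rm tr}(M\rho)$ ($0$ if $\Theta=\emptyset$). $\Theta\preceq_{dem}\Psi$ iff $\mathrm{Exp}_{dem}(\rho\models\Theta)\le\mathrm{Exp}_{dem}(\rho\models\Psi)$ for all $\rho\in\mathcal D(\mathcal H_V)$; $\Theta\preceq_{ang}\Psi$ iff $\mathrm{Exp}_{ang}(\rho\models\Theta)\le\mathrm{Exp}_{ang}(\rho\models\Psi)$ for all $\rho\in\mathcal D(\mathcal H_V)$. $\Theta\le_H\Psi$ iff $\forall M\in\Theta\,\exists N\in\Psi:M\sqsubseteq N$; $\Theta\le_S\Psi$ iff $\forall N\in\Psi\,\exists M\in\Theta:M\sqsubseteq N$. *)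

(* Defs.v *)
(* H_V is modelled as C^n with C = R[i] (complex numbers over a realType R),
   operators on H_V as n x n complex matrices. *)
From HB Require Import structures.
From mathcomp Require Import all_boot all_order all_algebra.
From mathcomp Require Import complex.
From mathcomp Require Import all_classical all_reals.
Set Implicit Arguments. Unset Strict Implicit. Unset Printing Implicit Defensive.
Import Order.TTheory GRing.Theory Num.Theory.
Local Open Scope ring_scope.
Local Open Scope classical_set_scope.

Section QDefs.
Variables (R : realType) (n : nat).
Local Notation C := R[i].
Local Notation Mx := 'M[C]_n.

Definition adjmx (m p : nat) (A : 'M[C]_(m, p)) : 'M[C]_(p, m) :=
  (map_mx Num.conj A)^T.

Definition hermitian (A : Mx) : Prop := adjmx A = A.

Definition psd (A : Mx) : Prop :=
  hermitian A /\ forall v : 'rV[C]_n, 0 <= (v *m A *m adjmx v) 0 0.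

Definition loewner (A B : Mx) : Prop := psd (B - A).

Definition effect (M : Mx) : Prop :=
  psd M /\ forall a : C, eigenvalue M a -> 0 <= a <= 1.

Definition pdo (rho : Mx) : Prop := psd rho /\ \tr rho <= 1.

Definition trR (A : Mx) : R := complex.Re (\tr A).

Definition Exp_dem (rho : Mx) (Th : set Mx) : R :=
  if pselect (Th = set0) then trR rho
  else inf [set trR (M *m rho) | M in Th].

Definition Exp_ang (rho : Mx) (Th : set Mx) : R :=
  if pselect (Th = set0) then 0
  else sup [set trR (M *m rho) | M in Th].

Definition prec_dem (Th Ps : set Mx) : Prop :=
  forall rho, pdo rho -> Exp_dem rho Th <= Exp_dem rho Ps.

Definition prec_ang (Th Ps : set Mx) : Prop :=
  forall rho, pdo rho -> Exp_ang rho Th <= Exp_ang rho Ps.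

Definition le_H (Th Ps : set Mx) : Prop :=
  forall M, Th M -> exists N, Ps N /\ loewner M N.

Definition le_S (Th Ps : set Mx) : Prop :=
  forall N, Ps N -> exists M, Th M /\ loewner M N.

Definition complI (Th : set Mx) : set Mx := [set 1%:M - M | M in Th].

End QDefs.

(* Main.v *)
Require Import Defs.
From HB Require Import structures.
From mathcomp Require Import all_boot all_order all_algebra.
From mathcomp Require Import complex.
From mathcomp Require Import all_classical all_reals.
Import Order.TTheory GRing.Theory Num.Theory.
Local Open Scope ring_scope.
Local Open Scope classical_set_scope.
Local Open Scope sesquilinear_scope.

Section S.
Variables (R : realType) (n : nat).
Local Notation C := R[i].

Lemma adjE m p (A : 'M[C]_(m, p)) : adjmx A = A ^t*.
Proof. by rewrite /adjmx map_trmx. Qed.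

Lemma ReB (x y : C) : complex.Re (x - y) = complex.Re x - complex.Re y.
Proof. by case: x; case: y. Qed.

Lemma Re_ge0 (x : C) : 0 <= x -> 0 <= complex.Re x.
Proof. by rewrite lecE => /andP[_]. Qed.

Lemma diag_entry (A B : 'M[C]_n) i :
  (A *m B *m adjmx A) i i = (row i A *m B *m adjmx (row i A)) 0 0.
Proof.
rewrite !mxE; apply: eq_bigr => k _; rewrite !mxE; congr (_ * _).
by apply: eq_bigr => l _; rewrite !mxE.
Qed.

Lemma tr_psd_ge0 (M rho : 'M[C]_n) : psd M -> psd rho -> 0 <= \tr (M *m rho).
Proof.
move=> [hM pM] [hr pr].
have nr : rho \is normalmx.
  apply/normalmxP; rewrite -adjE hr //.
have := orthomx_spectralP nr.
set P := spectralmx rho; set D := spectral_diag rho => rhoE.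
have Pu : P \is unitarymx by apply: spectral_unitarymx.
rewrite invmx_unitary // in rhoE.
have DE : diag_mx D = P *m rho *m adjmx P.
  by rewrite rhoE adjE !mulmxA (unitarymxP Pu) mul1mx mulmxtVK.
rewrite rhoE !mulmxA mxtrace_mulC !mulmxA -adjE.
rewrite /mxtrace; apply: sumr_ge0 => i _.
rewrite mul_mx_diag !mxE.
apply: mulr_ge0.
  have := pM (row i P); rewrite -diag_entry. by rewrite mxE.
have := pr (row i P); rewrite -diag_entry -DE mxE eqxx mulr1n.
done.
Qed.

Lemma trR_ge0 (M rho : 'M[C]_n) : psd M -> psd rho -> 0 <= trR (M *m rho).
Proof. by move=> hM hr; apply: Re_ge0; apply: tr_psd_ge0. Qed.

Lemma trR_compl (M rho : 'M[C]_n) : trR ((1%:M - M) *m rho) = trR rho - trR (M *m rho).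
Proof. by rewrite /trR mulmxBl mul1mx linearB ReB. Qed.

Lemma key (rho : 'M[C]_n) (Th : set 'M[C]_n) : psd rho ->
  (forall M, Th M -> effect M) ->
  Exp_ang rho (complI Th) = trR rho - Exp_dem rho Th.
Proof.
move=> hr hTh; rewrite /Exp_ang /Exp_dem.
case: pselect => [E0|En0]; case: pselect => [F0|Fn0].
- by rewrite subrr.
- exfalso; apply: Fn0; apply/seteqP; split => // M TM.
  have : complI Th (1%:M - M) by exists M.
  by rewrite E0.
- exfalso; apply: En0; apply/seteqP; split => // X [M TM _].
  by move: TM; rewrite F0.
set S := [set trR (M *m rho) | M in Th].
have [M0 TM0] : exists M, Th M by apply/set0P/eqP.
have hsN : has_sup (-%R @` S).
  apply/has_inf_supN; split; first by exists (trR (M0 *m rho)); exists M0.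
  exists 0 => _ [M TM <-]; apply: trR_ge0 => //; exact: (hTh M TM).1.
have hs1 : has_sup [set trR rho].
  by split; [exists (trR rho) | exists (trR rho) => x ->].
rewrite /inf opprK -[in RHS](sup1 (trR rho)) -sup_sumE //.
congr sup; apply/seteqP; split.
- move=> _ [X [M TM <-] <-]; rewrite trR_compl.
  exists (trR rho) => //; exists (- trR (M *m rho)) => //.
  by exists (trR (M *m rho)) => //; exists M.
- move=> _ [c -> [_ [_ [M TM <-] <-] <-]].
  by exists (1%:M - M); [exists M | rewrite trR_compl].
Qed.
End S.

Theorem lemma3p3 (R : realType) (n : nat) (Th Ps : set 'M[R[i]]_n) :
  (forall M, Th M -> effect M) -> (forall M, Ps M -> effect M) ->
  (prec_dem Th Ps <-> prec_ang (complI Ps) (complI Th)) /\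
  (le_S Th Ps <-> le_H (complI Ps) (complI Th)).
Proof.
move=> hT hP; split.
  split=> H rho hr; have := H rho hr; rewrite !key //; try exact: hr.1.
    by move=> h; rewrite lerB.
  by rewrite lerD2l lerN2.
have E : forall A B : 'M[R[i]]_n, (1%:M - A) - (1%:M - B) = B - A.
  by move=> A B; rewrite opprB addrC addrA subrK.
split.
- move=> H _ [N PN <-]; have [M [TM hMN]] := H N PN.
  exists (1%:M - M); split; first by exists M.
  by rewrite /loewner E.
- move=> H N PN.
  have [_ [[M TM <-] h]] := H (1%:M - N) (ex_intro2 _ _ N PN erefl).
  by exists M; split => //; move: h; rewrite /loewner E.
Qed.
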